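(* Let $q(n)$ denote the number of partitions of $n$ into distinct parts, with $q(0)=1$ and $q(n)=0$ for $n<0$, and define $s(n)=q(n)-2q(n-1)+q(n-2)$. Then for every integer $n\ge 6$, $s(n)$ equals the number of partitions of $n$ with parts $q_1\ge q_2\ge\dots\ge q_h$ such that $h\ge 3$, $q_j-q_{j+1}\in\{0,1\}$ for all $1\le j<h$, $q_1=q_2$, and the two smallest parts are both equal to $3$: $q_{h-1}=q_h=3$.
   Context: $q(n)$ counts strict partitions (partitions into distinct parts) of $n$. *)

(* Defs.v *)
From mathcomp Require Import all_boot all_order all_algebra.
Set Implicit Arguments. Unset Strict Implicit. Unset Printing Implicit Defensive.

Definition is_partition (n : nat) (s : seq nat) : bool :=
  [&& sorted geq s, all (fun x => 0 < x) s & sumn s == n].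

Definition is_strict_partition (n : nat) (s : seq nat) : bool :=
  is_partition n s && uniq s.

Fixpoint all_seqs (b k : nat) : seq (seq nat) :=
  if k is k'.+1 then
    [::] :: [seq x :: t | x <- iota 0 b.+1, t <- all_seqs b k']
  else [:: [::]].

(* Every partition of n has at most n parts, each at most n, so it appears in
   [all_seqs n n]; hence this counts ALL lists s with P s that are partitions of n. *)
Definition count_partitions (P : seq nat -> bool) (n : nat) : nat :=
  count (fun s => is_partition n s && P s) (undup (all_seqs n n)).

Definition qn (n : nat) : nat := count_partitions uniq n.

Definition q (z : int) : nat :=
  match z with Posz n => qn n | Negz _ => 0%N end.

Local Open Scope ring_scope.
Definition s (n : int) : int := (q n)%:Z - 2 * (q (n - 1))%:Z + (q (n - 2))%:Z.
Local Close Scope ring_scope.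

(* Property of a partition q_1 >= ... >= q_h (list index j-1 <-> q_j):
   h >= 3, q_j - q_{j+1} in {0,1}, q_1 = q_2, q_{h-1} = q_h = 3. *)
Definition good (p : seq nat) : bool :=
  let h := size p in
  [&& 3 <= h,
      all (fun j => (nth 0 p j - nth 0 p j.+1 == 0) || (nth 0 p j - nth 0 p j.+1 == 1))
          (iota 0 h.-1),
      nth 0 p 0 == nth 0 p 1,
      nth 0 p h.-2 == 3 & nth 0 p h.-1 == 3].

(* Main.v *)
Require Import Defs.
From mathcomp Require Import all_boot all_order all_algebra.
From mathcomp Require Import ring zify.
Import GRing.Theory.

Fixpoint cnt (a b m : nat) : nat :=
  if b is b'.+1 then cnt a b' m + (if (a <= b) && (b <= m) then cnt a b' (m - b) else 0)
  else (m == 0 : nat).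

Local Open Scope ring_scope.
Fixpoint Cp (a b : nat) : {poly int} :=
  if b is b'.+1 then Cp a b' * (if (a <= b)%N then 1 + 'X^b else 1) else 1.

Lemma coef_Cp a b m : (Cp a b)`_m = (cnt a b m)%:Z.
Proof.
elim: b m => [|b IH] m /=; first by rewrite coefC; case: m.
case: ifP => ha /=.
  rewrite mulrDr mulr1 coefD coefMXn IH PoszD; congr (_ + _).
  by case: ltnP => //= hm; rewrite IH.
by rewrite mulr1 IH addn0.
Qed.

Lemma CpS a b : Cp a b.+1 = Cp a b * (if (a <= b.+1)%N then 1 + 'X^(b.+1) else 1).
Proof. by []. Qed.

Lemma Cp12 H : (1 <= H)%N -> Cp 1 H = (1 + 'X) * Cp 2 H.
Proof.
elim: H => [//|H IH] _.
case: H IH => [|H] IH; first by rewrite /= !mul1r !mulr1 expr1.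
by rewrite CpS [Cp 2 _]CpS IH // mulrA.
Qed.

Lemma key H : (2 <= H)%N ->
  (1 - 'X)^+2 * Cp 1 H = 1 - 'X + 'X^3 - 'X^4 + 'X^5
    + \sum_(3 <= h < H.+1) 'X^(3*h) * Cp 2 (h-2)
    - 'X^(2*H+3) * Cp 2 (H-1) - 'X^(H+1) * (1 - 'X) * Cp 1 H.
Proof.
elim: H => [//|H IH] hH.
have [h1|h2] := leqP H 1.
  have -> : H = 1%N by apply/eqP; rewrite eqn_leq h1.
  rewrite big_geq //=. ring.

have {}IH := IH h2.
have e1 : Cp 1 H.+1 = Cp 1 H * (1 + 'X^(H.+1)) by [].
have e2 : Cp 2 (H.+1 - 1) = Cp 2 (H - 1) * (1 + 'X^H).
  rewrite subn1 /=. case: H h2 {IH hH e1} => [|H] //= h2.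
  by rewrite subn1 /= h2.
have e3 : Cp 1 H = (1 + 'X) * Cp 2 H by apply: Cp12; apply: ltnW.
have e4 : Cp 2 H = Cp 2 (H - 1) * (1 + 'X^H).
  case: H h2 {IH hH e1 e2 e3} => [|H] //= h2. by rewrite subn1 /= h2.
have e5 : (H.+1 - 2 = H - 1)%N by rewrite subSS subn1.
rewrite e1 e2.
have -> : (1 - 'X)^+2 * (Cp 1 H * (1 + 'X^(H.+1))) = (1 - 'X)^+2 * Cp 1 H + (1 - 'X)^+2 * Cp 1 H * 'X^(H.+1) by ring.
rewrite {1}IH e3 e4 [in RHS]big_nat_recr //= ?e5.
have pw : forall e k j, e = (k + H * j)%N -> 'X^e = 'X^k * ('X^H)^+j :> {poly int}.
  by move=> e k j ->; rewrite -exprM exprD.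
rewrite ?(pw (3 * H.+1)%N 3%N 3%N) ?(pw (2 * H.+1 + 3)%N 5%N 2%N) ?(pw (H.+1 + 1)%N 2%N 1%N)
  ?(pw (2 * H + 3)%N 3%N 2%N) ?(pw (H + 1)%N 1%N 1%N) ?(pw (H.+1)%N 1%N 1%N); try lia.
set P := Cp 2 (H-1). set y := 'X^H.
ring.
Qed.


Lemma coef_id0 n : (6 <= n)%N ->
  (Cp 1 n)`_n - (Cp 1 n)`_n.-1 *+ 2 + (Cp 1 n)`_n.-2 =
  \sum_(3 <= h < n.+1) ('X^(3*h) * Cp 2 (h-2))`_n.
Proof.
move=> hn.
have h2 : (2 <= n)%N by apply: leq_trans hn.
have := congr1 (fun p : {poly int} => p`_n) (@key n h2).
have e : (1 - 'X)^+2 * Cp 1 n = Cp 1 n - 'X * Cp 1 n *+ 2 + 'X * ('X * Cp 1 n) :> {poly int}.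
  by rewrite mulr2n; ring.
rewrite e -mulrA; clear e h2.
move: (Cp 1 n) (Cp 2 (n - 1)) => C D.
case: n hn => [|[|[|[|[|[|m]]]]]] // _.
rewrite !coefD ?coefN coefMn !coefXM coef1 !coefX /= !coefXnM coef_sum.
rewrite ifT; last by lia.
rewrite ifT; last by lia.
by rewrite !subr0 !add0r ?addr0.
Qed.

Lemma coef_id n : (6 <= n)%N ->
  (cnt 1 n n)%:Z - (cnt 1 n n.-1)%:Z *+ 2 + (cnt 1 n n.-2)%:Z =
  \sum_(3 <= h < n.+1) (if (n < 3 * h)%N then 0 else (cnt 2 (h-2) (n - 3*h))%:Z).
Proof.
move=> hn; rewrite -!coef_Cp coef_id0 //.
by apply: eq_bigr => h _; rewrite coefXnM coef_Cp.
Qed.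


Local Close Scope ring_scope.

Lemma all_seqsS b k : all_seqs b k.+1 =
  [::] :: [seq x :: t | x <- iota 0 b.+1, t <- all_seqs b k].
Proof. by []. Qed.

Lemma mem_all_seqs b k s : (s \in all_seqs b k) = (size s <= k) && all (fun x => x <= b) s.
Proof.
elim: k s => [|k IH] [|x t] //; rewrite all_seqsS.
rewrite in_cons (_ : (x :: t == [::]) = false) // orFb [RHS]/=.
apply/idP/idP.
  move/seq.allpairsP => [[y u] [hy hu e]]; case: e => -> ->; move: hy hu; rewrite mem_iota IH => /andP[_ hy] /andP[h1 h2]; apply/and3P; split => //; lia.
move=> /andP[ht /andP[hx ha]]; apply/seq.allpairsP; exists (x, t); split => //; first by rewrite mem_iota /=; lia.
by rewrite /= IH ha andbT -ltnS.
Qed.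

Lemma size_le_sumn s : all (fun x => 0 < x) s -> size s <= sumn s.
Proof. by elim: s => //= x s IH /andP[hx /IH]; lia. Qed.

Lemma mem_le_sumn s x : x \in s -> x <= sumn s.
Proof. elim: s => //= y s IH; rewrite in_cons => /orP[/eqP ->|/IH]; lia. Qed.

Lemma count_partitions_eq P n L : uniq L ->
  (forall s, (s \in L) = is_partition n s && P s) -> count_partitions P n = size L.
Proof.
move=> uL hL; rewrite /count_partitions -size_filter.
apply: perm_size; apply: uniq_perm; first by rewrite filter_uniq // undup_uniq.
  by [].
move=> s; rewrite mem_filter mem_undup hL.
case hp: (is_partition n s && P s) => //=.
move: hp => /andP[/and3P[_ hpos /eqP hs] _].
rewrite mem_all_seqs -{1 2}hs size_le_sumn //=.
by apply/allP => x hx; apply: mem_le_sumn.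
Qed.

Lemma geq_trans : transitive geq.
Proof. by move=> x y z h1 h2; apply: leq_trans h2 h1. Qed.

Lemma is_partition_cons m x t : is_partition m (x :: t) =
  [&& all (fun y => y <= x) t, 0 < x, is_partition (m - x) t & x <= m].
Proof.
rewrite /is_partition /= path_sortedE; last exact: geq_trans.
case: (all _ t) => //=; case: (sorted _ t) => //=; case: (0 < x) => //=.
case: (all _ t) => //=; apply/eqP/andP.
  by move=> <-; split; [apply/eqP; lia | lia].
by case=> /eqP h1 h2; lia.
Qed.

Lemma is_partition_nil m : is_partition m [::] = (m == 0).
Proof. by rewrite /is_partition /= eq_sym. Qed.

Fixpoint ST (b m : nat) : seq (seq nat) :=
  if b is b'.+1 then ST b' m ++ (if b <= m then [seq b :: t | t <- ST b' (m - b)] else [::])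
  else (if m == 0 then [:: [::]] else [::]).

Lemma STS b m : ST b.+1 m = ST b m ++ (if b.+1 <= m then [seq b.+1 :: t | t <- ST b (m - b.+1)] else [::]).
Proof. by []. Qed.

Lemma mem_ST b m s : (s \in ST b m) = [&& is_partition m s, uniq s & all (fun x => x <= b) s].
Proof.
elim: b m s => [|b IH] m s.
  rewrite /=; case: s => [|x t]; first by rewrite is_partition_nil /=; case: (m == 0).
  rewrite is_partition_cons.
  have -> : (x :: t \in (if m == 0 then [:: [::]] else [::])) = false by case: (m == 0).
  by case: x => [|x] /=; rewrite ?andbF.
rewrite STS mem_cat IH.
case: s => [|x t].
  case: ifP => _; rewrite ?orbF //.
  by rewrite (_ : [::] \in _ = false) ?orbF //; apply/mapP => [[]].
rewrite is_partition_cons /=.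
have [hx|hx] := leqP x b.
  rewrite (_ : x :: t \in _ = false); last first.
    by case: ifP => // _; apply/mapP => [[u _ [e _]]]; lia.
  rewrite orbF (leqW hx).
  apply/idP/idP => /and4P[/and4P[hp hx0 hpt hxm] hu _ ha]; apply/and4P;
   (split => //; first by apply/and4P); apply/allP => y /(allP hp) hy; lia.
rewrite !andbF orFb.
have [e|ne] := eqVneq x b.+1.
  subst x; case: ifP => hm; last by rewrite in_nil ?hm !andbF.
  rewrite mem_map; last by move=> u v [].
  rewrite IH.
  apply/idP/idP.
    move=> /and3P[hp ut ht]; rewrite hp ut ?hm ?leqnn /=.
    have -> : all (fun y => y <= b.+1) t by apply/allP => y /(allP ht) hy; lia.
    by rewrite !andbT; apply/negP => hin; have := allP ht _ hin; rewrite /= ltnn.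
  case/and4P=> [/and4P[hp _ hpt _] /andP[hnb ut] _ _]; rewrite hpt ut /=.
  apply/allP => y hy; have := allP hp y hy; rewrite leq_eqVlt ltnS.
  by case/orP => // /eqP ey; rewrite -ey hy in hnb.
have -> : x <= b.+1 = false by apply/negbTE; rewrite -ltnNge ltn_neqAle eq_sym ne.
rewrite !andbF; case: ifP => _ //.
by apply/mapP => [[u _ [e _]]]; rewrite e eqxx in ne.
Qed.


Lemma uniq_ST b m : uniq (ST b m).
Proof.
elim: b m => [|b IH] m; first by rewrite /=; case: (m == 0).
rewrite STS cat_uniq IH; case: ifP => _; rewrite ?andbT //.
rewrite map_inj_uniq ?IH ?andbT; last by move=> u v [].
apply/hasPn => s /mapP [u _ ->]; rewrite mem_ST /= negb_and; apply/orP; right.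
by rewrite ltnn andbF.
Qed.

Lemma size_ST b m : size (ST b m) = cnt 1 b m.
Proof.
elim: b m => [|b IH] m; first by rewrite /=; case: (m == 0).
by rewrite STS size_cat IH /=; case: ifP => //= _; rewrite size_map IH.
Qed.

Lemma qn_cnt m : qn m = cnt 1 m m.
Proof.
rewrite /qn (@count_partitions_eq _ _ (ST m m)) ?uniq_ST ?size_ST // => s.
rewrite mem_ST; case hp: (is_partition m s) => //=; case: (uniq s) => //=.
move: hp => /and3P[_ _ /eqP <-]; apply/allP => x hx; exact: mem_le_sumn.
Qed.

Lemma cnt_stable a b m : m <= b -> cnt a b m = cnt a m m.
Proof.
elim: b => [|b IH] hb; first by move: hb; rewrite leqn0 => /eqP ->.
rewrite leq_eqVlt in hb; case/orP: hb => [/eqP <- //|hb].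
rewrite /= -IH //; have -> : (b < m) = false by apply/negbTE; rewrite -leqNgt.
by rewrite andbF addn0.
Qed.

Definition gr (x y : nat) := (y <= x) && (x <= y.+1).
Definition lift k u r := map (addn k) u ++ nseq r k.
Definition unlift k s := [seq x - k | x <- s & k < x].
Definition okl u := [&& sorted gr u, all (fun x => 0 < x) u & (u == [::]) || (last 0 u == 1)].
Definition topm u := (u == [::]) || (nth 0 u 0 == nth 0 u 1).

Lemma unlift_lift k u r : all (fun x => 0 < x) u -> unlift k (lift k u r) = u.
Proof.
rewrite /unlift /lift; elim: u => [_|x u IH /andP[hx hu]] /=.
  by elim: r => //= r; rewrite ltnn.
by rewrite (_ : k < k + x) /= ?IH ?addKn //; lia.
Qed.

Lemma sumn_map_add k u : sumn (map (addn k) u) = sumn u + k * size u.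
Proof. elim: u => [|x u IH] /=; [lia | rewrite IH; lia]. Qed.

Lemma path_nseq k r : path gr k (nseq r k).
Proof. by elim: r => //= r ->; rewrite /gr leqnn leqnSn. Qed.

Lemma okl_cons x u : okl (x :: u) -> okl u.
Proof.
case/and3P=> /= hp /andP[_ ha] hl; rewrite /okl (path_sorted hp) ha /=.
by case: u hp hl {ha}.
Qed.

Lemma sorted_lift k u r : okl u -> 0 < r -> sorted gr (lift k u r).
Proof.
move=> hu hr; elim: u hu => [|x u IH] hu.
  by case: r hr => //= r _; apply: path_nseq.
have hu' := @okl_cons _ _ hu; have {}IH := IH hu'.
move: hu => /and3P[/= hp /andP[hx _] hl].
case: u hp hl IH {hu'} => [|y u] /= hp hl IH.
  rewrite /lift /=; case: r hr {IH} => //= r _; rewrite path_nseq andbT.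
  by move: hl => /eqP ->; rewrite /gr; lia.
rewrite /lift /= in IH *; rewrite IH andbT.
by move: hp => /andP[]; rewrite /gr; lia.
Qed.

Lemma last_lift k u r : 0 < r -> last 0 (lift k u r) = k.
Proof.
move=> hr; rewrite /lift last_cat; case: r hr => //= r _.
by elim: r => //= r.
Qed.

Lemma sumn_lift k u r : sumn (lift k u r) = sumn u + k * (size u + r).
Proof. by rewrite /lift sumn_cat sumn_map_add sumn_nseq; lia. Qed.

Lemma size_lift k u r : size (lift k u r) = size u + r.
Proof. by rewrite /lift size_cat size_map size_nseq. Qed.

Lemma all_lift k u r : all (fun x => k <= x) (lift k u r).
Proof.
rewrite /lift all_cat; apply/andP; split.
  by apply/allP => x /mapP [y _ ->]; apply: leq_addr.
by apply/allP => x; rewrite mem_nseq => /andP[_ /eqP ->].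
Qed.

Lemma nth_lift_lt k u r i : i < size u -> nth 0 (lift k u r) i = k + nth 0 u i.
Proof. by move=> hi; rewrite /lift nth_cat size_map hi (nth_map 0). Qed.

Lemma nth_lift_ge k u r i : size u <= i < size u + r -> nth 0 (lift k u r) i = k.
Proof.
move=> /andP[h1 h2]; rewrite /lift nth_cat size_map ltnNge h1 /= nth_nseq.
by rewrite ifT //; lia.
Qed.

Lemma topm_lift k u r : 0 < k -> all (fun x => 0 < x) u -> 0 < r ->
  (nth 0 (lift k u r) 0 == nth 0 (lift k u r) 1) =
  (if u == [::] then 1 < r else nth 0 u 0 == nth 0 u 1).
Proof.
move=> hk hu hr; case: u hu => [|x [|y u]] /=.
- by rewrite /lift /= !nth_nseq hr; case: r hr => [|[|r]] //= _; rewrite ?eqxx //; case: k hk.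
- move=> /andP[hx _]; rewrite /lift /= nth_nseq hr; case: x hx => // x _; lia.
- by move=> _; rewrite /lift /= eqn_add2l.
Qed.

Lemma last_cons0 x s : s != [::] -> last 0 (x :: s) = last 0 s.
Proof. by case: s. Qed.

Lemma decomp k s : 0 < k -> sorted gr s -> s != [::] -> last 0 s = k ->
  [/\ okl (unlift k s), s = lift k (unlift k s) (size s - size (unlift k s))
    & size (unlift k s) < size s].
Proof.
move=> hk; elim: s => [//|x s IH] hs _ hl.
case: s IH hs hl => [|y s] IH hs hl.
  move: hl => /= ->; rewrite /unlift /= ltnn /=; split => //.
have hne : y :: s != [::] by [].
rewrite last_cons0 // in hl.
have hs' : sorted gr (y :: s) by move: hs => /= /andP[].
have [hu e hsz] := IH hs' hne hl.
set u' := unlift k (y :: s) in hu e hsz *.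
have hgr : gr x y by move: hs => /= /andP[].
have hyk : k <= y.
  by have := all_lift k u' (size (y :: s) - size u'); rewrite -e /= => /andP[].
have [hxk|hxk] := ltnP k x.
  have eu : unlift k (x :: y :: s) = (x - k) :: u' by rewrite /unlift /= hxk.
  rewrite eu /=; split.
  - move: hu => /and3P[hs1 hp1 hl1]; rewrite /okl /= hp1 andbT subn_gt0 hxk /=.
    case: u' e hs1 hl1 {hp1 hsz eu} => [|z u'] e hs1 hl1 /=.
      have ey : y = k by move: e; rewrite /lift /= => -[].
      by move: hgr; rewrite /gr ey; lia.
    move: hl1 => /= ->; rewrite andbT (_ : path gr z u' = true) // andbT.
    move: e; rewrite /lift /= => -[ey _]; move: hgr; rewrite /gr ey; lia.
  - by rewrite /lift /= subnKC ?(ltnW hxk) //; congr (_ :: _); move: e; rewrite /lift /= subSS.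
  - by rewrite ltnS.
have exk : x = k by move: hgr; rewrite /gr; lia.
have eyk : y = k by move: hgr; rewrite /gr; lia.
have eu : unlift k (x :: y :: s) = u' by rewrite /unlift /= exk ltnn.
rewrite eu; have u0 : u' = [::].
  move: hu e {hsz eu}; case: u' => // z u' /and3P[_ /= /andP[hz _] _].
  by rewrite /lift /= => -[ey _]; lia.
rewrite u0 in e *; split => //.
rewrite /lift /= in e *.
by rewrite exk e.
Qed.


Fixpoint GG (b m : nat) : seq (seq nat) :=
  if b is b'.+1 then GG b' m ++
    (if (2 <= b) && (b <= m) then [seq lift 1 u (b - size u) | u <- GG b' (m - b)] else [::])
  else (if m == 0 then [:: [::]] else [::]).

Lemma GGS b m : GG b.+1 m = GG b m ++
    (if (2 <= b.+1) && (b.+1 <= m) then [seq lift 1 u (b.+1 - size u) | u <- GG b (m - b.+1)] else [::]).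
Proof. by []. Qed.

Definition GGp b m t := [&& okl t, topm t, size t <= b & sumn t == m].

Lemma okl_pos t : okl t -> all (fun x => 0 < x) t.
Proof. by case/and3P. Qed.

Lemma topm_size t : topm t -> all (fun x => 0 < x) t -> t != [::] -> 1 < size t.
Proof. by case: t => [|x [|y t]] //=; rewrite /topm /= => /eqP -> /andP[]. Qed.

Arguments okl_pos {t}.
Arguments topm_size {t}.
Arguments decomp {k s}.

Lemma mem_GG b m t : (t \in GG b m) = GGp b m t.
Proof.
elim: b m t => [|b IH] m t.
  rewrite /= /GGp leqn0 size_eq0; case: t => [|x t] /=.
    by case: m.
  by rewrite !andbF; case: m.
rewrite GGS mem_cat IH; apply/idP/idP.
  case/orP => [/and4P[h1 h2 h3 h4]|].
    by rewrite /GGp h1 h2 h4 (leq_trans h3) ?andbT.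
  case: ifP => // /andP[hb hm] /mapP [u]; rewrite IH => /and4P[hu hto hsz /eqP hsum] ->.
  have hr : 0 < b.+1 - size u by rewrite subn_gt0 ltnS.
  have hpos := okl_pos hu.
  apply/and4P; split.
  - rewrite /okl sorted_lift // last_lift // eqxx orbT andbT.
    by apply/allP => x hx; have := allP (all_lift 1 u (b.+1 - size u)) x hx.
  - rewrite /topm topm_lift //; apply/orP; right.
    case: eqP => [->|/eqP ne]; first by rewrite /= subn0.
    by move: hto; rewrite /topm (negbTE ne).
  - by rewrite size_lift; lia.
  - by rewrite sumn_lift hsum; apply/eqP; lia.
move=> /and4P[hok hto hsz /eqP hsum].
have [hle|hgt] := leqP (size t) b.
  by apply/orP; left; rewrite /GGp hok hto hle hsum eqxx.
apply/orP; right.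
have hst : size t = b.+1 by apply/eqP; rewrite eqn_leq hsz hgt.
have hne : t != [::] by rewrite -size_eq0 hst.
have hpos := okl_pos hok.
have hl : last 0 t = 1.
  by move: hok => /and3P[_ _]; rewrite (negbTE hne) /= => /eqP.
have hs : sorted gr t by case/and3P: hok.
have [hu e hlt] := decomp (ltn0Sn 0) hs hne hl.
set u := unlift 1 t in hu e hlt.
have h2 := topm_size hto hpos hne.
have hupos := okl_pos hu.
have hlt' : size u < b.+1 by rewrite -hst.
have hsum' : sumn t = sumn u + b.+1 by rewrite {1}e sumn_lift hst; lia.
rewrite ifT; last by apply/andP; split; lia.
apply/mapP; exists u; last by rewrite {1}e hst.
rewrite IH; apply/and4P; split => //.
- move: hto; rewrite /topm (negbTE hne) /= e topm_lift ?subn_gt0 //.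
  by case: (u == [::]).
- by apply/eqP; lia.
Qed.

Lemma uniq_GG b m : uniq (GG b m).
Proof.
elim: b m => [|b IH] m; first by rewrite /=; case: (m == 0).
rewrite GGS cat_uniq IH; case: ifP => _; rewrite ?andbT //.
rewrite map_inj_in_uniq ?IH ?andbT; last first.
  move=> u v; rewrite !mem_GG => /and4P[hu _ _ _] /and4P[hv _ _ _] e.
  by rewrite -(@unlift_lift 1 u (b.+1 - size u) (okl_pos hu)) e unlift_lift // (okl_pos hv).
apply/hasPn => s /mapP [u]; rewrite mem_GG => /and4P[_ _ hsz _] ->.
rewrite mem_GG /GGp size_lift subnKC ?ltnn ?andbF //.
exact: leqW.
Qed.

Lemma size_GG b m : size (GG b m) = cnt 2 b m.
Proof.
elim: b m => [|b IH] m; first by rewrite /=; case: (m == 0).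
by rewrite GGS size_cat IH /=; case: ifP => //= _; rewrite size_map IH.
Qed.

Lemma sorted_gr_iff s : sorted gr s = sorted geq s &&
  all (fun j => (nth 0 s j - nth 0 s j.+1 == 0) || (nth 0 s j - nth 0 s j.+1 == 1)) (iota 0 (size s).-1).
Proof.
case: s => [//|x t] /=.
apply/idP/idP.
  move/(pathP 0) => h; apply/andP; split.
    by apply/(pathP 0) => i hi; have := h i hi; rewrite /gr => /andP[].
  apply/allP => j; rewrite mem_iota => /andP[_ hj]; have := h j hj; rewrite /gr /=; lia.
move/andP=> [/(pathP 0) h1 /allP h2]; apply/(pathP 0) => i hi.
have := h1 i hi; have := h2 i; rewrite mem_iota /= hi => /(_ isT); rewrite /gr; lia.
Qed.

Definition hrange n := [seq h <- index_iota 3 n.+1 | 3 * h <= n].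
Definition goodL n :=
  flatten [seq [seq lift 3 u (h - size u) | u <- GG (h - 2) (n - 3 * h)] | h <- hrange n].

Lemma mem_goodL n s : (s \in goodL n) = is_partition n s && good s.
Proof.
apply/idP/idP.
  case/flatten_mapP => h; rewrite mem_filter mem_index_iota => /andP[h3n /andP[h3 hn]].
  case/mapP => u; rewrite mem_GG => /and4P[hu hto hsz /eqP hsum] ->.
  have hr : 1 < h - size u by move: hsz h3; set su := size u; lia.
  have hpos := okl_pos hu.
  have hs := @sorted_lift 3 u _ hu (ltnW hr).
  have hal := all_lift 3 u (h - size u).
  have hsz' : size (lift 3 u (h - size u)) = h by rewrite size_lift subnKC //; apply: leq_trans hsz (leq_subr _ _).
  move: hs; rewrite sorted_gr_iff => /andP[hs hit].
  apply/andP; split.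
    rewrite /is_partition hs sumn_lift hsum /=; apply/andP; split.
      by apply/allP => x hx; have := allP hal x hx; lia.
    by apply/eqP; lia.
  rewrite /good hit hsz' h3 /= topm_lift ?(ltnW hr) //.
  have esz : size u + (h - size u) = h by rewrite subnKC //; apply: leq_trans hsz (leq_subr _ _).
  rewrite !nth_lift_ge ?esz ?eqxx ?andbT; first last.
  - by apply/andP; split; move: hsz h3; set su := size u; lia.
  - by apply/andP; split; move: hsz h3; set su := size u; lia.
  case: eqP => [_|/eqP ne] //.
  by move: hto; rewrite /topm (negbTE ne).
move=> /andP[/and3P[hs hpos /eqP hsum] /and5P[h3 hit h01 hm2 hm1]].
have hgr : sorted gr s by rewrite sorted_gr_iff hs hit.
have hne : s != [::] by rewrite -size_eq0 -lt0n (leq_trans _ h3).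
have hl : last 0 s = 3 by rewrite -nth_last; apply/eqP.
have [hu e hlt] := decomp (isT : 0 < 3) hgr hne hl.
set u := unlift 3 s in hu e hlt.
have nth0 : forall i, nth 0 s i = nth 0 (lift 3 u (size s - size u)) i by move=> i; rewrite {1}e.
have hupos := okl_pos hu.
have hsu : size u <= (size s).-2.
  rewrite leqNgt; apply/negP => hgt; move: hm2; rewrite nth0 nth_lift_lt //.
  rewrite -{2}(addn0 3) eqn_add2l => /eqP hx.
  by have := allP hupos _ (mem_nth 0 hgt); rewrite /= hx.
have hsm : sumn s = sumn u + 3 * size s.
  by rewrite {1}e sumn_lift subnKC // ltnW.
apply/flatten_mapP; exists (size s).
  rewrite mem_filter mem_index_iota; move: h3 hsum hsm; set z := size s; lia.
apply/mapP; exists u; last by rewrite {1}e.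
rewrite mem_GG; apply/and4P; split => //.
- move: h01; rewrite !nth0 topm_lift // ?subn_gt0 // /topm.
  by case: (u == [::]).
- by rewrite subn2.
- by apply/eqP; move: hsum hsm; set z := size s; lia.
Qed.

Lemma uniq_flatten_map (S T : eqType) (F : S -> seq T) s : uniq s ->
  (forall x, x \in s -> uniq (F x)) ->
  (forall x y z, x \in s -> y \in s -> z \in F x -> z \in F y -> x = y) ->
  uniq (flatten (map F s)).
Proof.
elim: s => [//|x s IH] /= /andP[hx us] hu hd.
rewrite cat_uniq hu ?mem_head //= IH //; last first.
- by move=> a b z ha hb; apply: hd; rewrite in_cons ?ha ?hb orbT.
- by move=> a ha; apply: hu; rewrite in_cons ha orbT.
rewrite andbT; apply/hasPn => z /flatten_mapP [y hy hzy]; apply/negP => hzx.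
have hy' : y \in x :: s by rewrite in_cons hy orbT.
have exy := hd x y z (mem_head _ _) hy' hzx hzy.
by rewrite exy hy in hx.
Qed.

Lemma uniq_goodL n : uniq (goodL n).
Proof.
apply: uniq_flatten_map.
- by rewrite filter_uniq // iota_uniq.
- move=> h _; rewrite map_inj_in_uniq ?uniq_GG //.
  move=> u v; rewrite !mem_GG => /and4P[hu _ _ _] /and4P[hv _ _ _] e.
  by rewrite -(@unlift_lift 3 u (h - size u) (okl_pos hu)) e unlift_lift // (okl_pos hv).
move=> x y z; rewrite !mem_filter !mem_index_iota => /andP[_ /andP[hx _]] /andP[_ /andP[hy _]].
move=> /mapP [u]; rewrite mem_GG => /and4P[_ _ hu _] ->.
move=> /mapP [v]; rewrite mem_GG => /and4P[_ _ hv _] /(congr1 size).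
rewrite !size_lift !subnKC //.
- by apply: leq_trans hv (leq_subr _ _).
- by apply: leq_trans hu (leq_subr _ _).
Qed.

Lemma size_goodL n : size (goodL n) = \sum_(h <- hrange n) cnt 2 (h - 2) (n - 3 * h).
Proof.
rewrite /goodL size_flatten sumnE !big_map; apply: eq_bigr => h _.
by rewrite size_map size_GG.
Qed.

Lemma count_good n : count_partitions good n = \sum_(h <- hrange n) cnt 2 (h - 2) (n - 3 * h).
Proof.
rewrite (@count_partitions_eq _ _ (goodL n)) ?uniq_goodL ?size_goodL // => s.
exact: mem_goodL.
Qed.

Lemma sum_conv n : Posz (\sum_(h <- hrange n) cnt 2 (h - 2) (n - 3 * h)) =
  (\sum_(3 <= h < n.+1) (if (n < 3 * h)%N then 0 else (cnt 2 (h-2) (n - 3*h))%:Z))%R.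
Proof.
rewrite /hrange big_filter big_mkcond -natz natr_sum.
apply: eq_bigr => h _; rewrite ltnNge; case: ifP => //= _.
by rewrite natz.
Qed.

Theorem corollary1p6 (n : nat) : 6 <= n ->
  s (Posz n) = Posz (count_partitions good n).
Proof.
move=> hn; rewrite count_good sum_conv -coef_id // /s.
have e1 : (Posz n - 1 = Posz n.-1)%R by rewrite -subn1 subzn //; apply: leq_trans hn.
have e2 : (Posz n - 2 = Posz n.-2)%R by rewrite -subn2 subzn //; apply: leq_trans hn.
rewrite e1 e2 /= !qn_cnt -(@cnt_stable 1 n n.-1) ?leq_pred //.
rewrite -(@cnt_stable 1 n n.-2); last by apply: leq_trans (leq_pred _) (leq_pred _).
by rewrite mulr2n; ring.
Qed.
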